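(* Let $A$ be a central simple algebra of degree $n$ over a field $k$, let $r>1$ and $1\leqslant i_1<\cdots<i_r\leqslant n$ be integers, and let $I_r\subset A$ be a left ideal of $k$-dimension $ni_r$. Let $B=I_r/I_r^\circ I_r$. For a left ideal $I_j\subset I_r$, the kernel of $I_j\to I_r/I_r^\circ I_r$ is $I_r^\circ I_j$, so $I_j/I_r^\circ I_j$ is identified with its image in $B$. Then the map $$(I_1,\ldots,I_{r-1})\mapsto(I_j/I_r^\circ I_j)_{j=1,\ldots,r-1}$$ is a canonical bijection from the set of tuples of left ideals $I_1\subset\cdots\subset I_{r-1}\subset I_r$ of $A$ with $\dim_k I_j=ni_j$ onto the set of tuples $J_1\subset\cdots\subset J_{r-1}$ of left ideals of $B$ with $\dim_k J_j=i_ji_r$.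
   Context: $I^\circ=\{a\in A: Ia=0\}$ is the right annihilator; $UW$ denotes the $k$-span of products $uw$. $I_r^\circ I_r$ is a two-sided ideal of the ring $I_r$ (since $I_rI_r^\circ=0$), so $I_r/I_r^\circ I_r$ is a ring; it is a central simple $k$-algebra of degree $i_r$, isomorphic to $\mathrm{End}_A(I_r)$. *)

(* Defs.v *)
From HB Require Import structures.
From mathcomp Require Import all_boot all_algebra all_field.
Set Implicit Arguments. Unset Strict Implicit. Unset Printing Implicit Defensive.
Import GRing.Theory.
Local Open Scope ring_scope.
Local Open Scope vspace_scope.

Section Defs.
Variables (k : fieldType) (A : falgType k).

Definition left_ideal (I : {vspace A}) : bool := (fullv * I <= I)%VS.

Definition two_sided_ideal (I : {vspace A}) : bool :=
  (fullv * I <= I)%VS && (I * fullv <= I)%VS.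

Definition central_simple : Prop :=
  ('Z(fullv : {vspace A}) = (1 : {vspace A}))%VS /\
  (forall I : {vspace A}, two_sided_ideal I -> I = 0%VS \/ I = fullv).

Definition csa_degree (n : nat) : Prop := \dim (fullv : {vspace A}) = (n ^ 2)%N.

(* right annihilator I° = {a in A | I a = 0}, as the intersection of the
   kernels of left multiplication by the basis vectors of I *)
Definition rann (I : {vspace A}) : {vspace A} :=
  (\bigcap_(t < \dim I) lker (amull (tnth (vbasis I) t)))%VS.

End Defs.

(* Main.v *)
Require Import Defs.
From HB Require Import structures.
From mathcomp Require Import all_boot all_algebra all_field.
From mathcomp Require Import zify.
From Stdlib Require Import Classical.
Set Implicit Arguments. Unset Strict Implicit. Unset Printing Implicit Defensive.
Import GRing.Theory.
Local Open Scope ring_scope.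
Local Open Scope vspace_scope.

Section Basic.
Variables (k : fieldType) (A : falgType k).
Implicit Types (u v x y : A) (X Y C : {vspace A}).

Lemma amullE u v : amull u v = (u * v)%R. Proof. by rewrite lfunE. Qed.
Lemma amulrE u v : amulr u v = (v * u)%R. Proof. by rewrite lfunE. Qed.

Lemma lidP X : reflect (forall a x, x \in X -> (a * x)%R \in X) (left_ideal X).
Proof.
apply: (iffP prodvP) => [H a x Hx|H a x _ Hx]; last exact: H.
exact: H (memvf a) Hx.
Qed.

Lemma lid_cap X Y : left_ideal X -> left_ideal Y -> left_ideal (X :&: Y).
Proof.
move=> /lidP HX /lidP HY; apply/lidP => a x; rewrite !memv_cap => /andP[h1 h2].
by rewrite HX ?HY.
Qed.

Lemma lid_add X Y : left_ideal X -> left_ideal Y -> left_ideal (X + Y).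
Proof.
move=> /lidP HX /lidP HY; apply/lidP => a _ /memv_addP[x Hx [y Hy ->]].
by rewrite mulrDr memv_add ?HX ?HY.
Qed.

Lemma lid_img X b : left_ideal X -> left_ideal (amulr b @: X).
Proof.
move=> /lidP HX; apply/lidP => a _ /memv_imgP[x Hx ->].
by rewrite amulrE mulrA -amulrE memv_img ?HX.
Qed.

Lemma lid_full : left_ideal (fullv : {vspace A}).
Proof. by apply/lidP => a x _; rewrite memvf. Qed.

Lemma lid_mulA X : left_ideal (fullv * X).
Proof. by rewrite /left_ideal prodvA prodvSl ?subvf. Qed.

Lemma lid_left_mul X x : left_ideal X -> (amull x @: X <= X).
Proof.
move=> /lidP HX; apply/subvP => _ /memv_imgP[y Hy ->]; by rewrite amullE HX.
Qed.

Lemma dim_img_le (f : 'End(A)) X : (\dim (f @: X) <= \dim X)%N.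
Proof. by rewrite -(limg_ker_dim f X) leq_addl. Qed.

Lemma dim_full_gt0 : (0 < \dim (fullv : {vspace A}))%N.
Proof.
rewrite lt0n dimv_eq0; apply/eqP => H.
have : (1%R : A) \in (fullv : {vspace A}) by rewrite memvf.
by rewrite H memv0 oner_eq0.
Qed.

End Basic.

Section Simple.
Variables (k : fieldType) (A : falgType k).
Implicit Types (u v x y : A) (X Y C : {vspace A}).
Hypothesis simpleA : forall I : {vspace A}, two_sided_ideal I -> I = 0%VS \/ I = fullv.

Lemma simple_full X : left_ideal X -> X != 0%VS -> (X * fullv)%VS = fullv.
Proof.
move=> lX nX.
have H2 : two_sided_ideal (X * fullv)%VS.
  by rewrite /two_sided_ideal prodvA prodvSl //= -prodvA prodvSr ?subvf //.
have [H|//] := simpleA H2.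
move: nX; have : (X <= X * fullv)%VS.
  by rewrite -{1}(prodv1 X) prodvSr ?subvf.
by rewrite H subv0 => ->.
Qed.

Lemma simple_ann X y : left_ideal X -> X != 0%VS ->
  (forall x a, x \in X -> (x * a * y)%R = 0%R) -> y = 0%R.
Proof.
move=> lX nX H.
have : (X * fullv <= lker (amulr y))%VS.
  by apply/prodvP => x a Hx _; rewrite memv_ker amulrE H.
rewrite simple_full // => /subvP /(_ 1%R (memvf _)).
by rewrite memv_ker amulrE mul1r => /eqP.
Qed.

Lemma memv_imgAr y : y \in amulr y @: (fullv : {vspace A}).
Proof. by rewrite -{1}(mul1r y) -amulrE memv_img ?memvf. Qed.
Lemma memv_imgAl y : y \in amull y @: (fullv : {vspace A}).
Proof. by rewrite -{1}(mulr1 y) -amullE memv_img ?memvf. Qed.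

Lemma exists_minimal : exists L : {vspace A}, [/\ left_ideal L, L != 0%VS &
  forall Y, left_ideal Y -> Y != 0%VS -> (\dim L <= \dim Y)%N].
Proof.
suff H : forall d (X : {vspace A}), (\dim X <= d)%N -> left_ideal X -> X != 0%VS ->
  exists L : {vspace A}, [/\ left_ideal L, L != 0%VS &
  forall Y, left_ideal Y -> Y != 0%VS -> (\dim L <= \dim Y)%N].
  apply: (H _ fullv (leqnn _) (lid_full _)).
  by rewrite -dimv_eq0 -lt0n dim_full_gt0.
elim=> [|d IH] X hd lX nX.
  by move: nX; rewrite -dimv_eq0; move: hd; rewrite leqn0 => ->.
case: (classic (forall Y, left_ideal Y -> Y != 0%VS -> (\dim X <= \dim Y)%N)) => Hc.
  by exists X.
move/not_all_ex_not: Hc; case=> Y HY.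
have [lY HY2] := imply_to_and _ _ HY; have [nY hY] := imply_to_and _ _ HY2.
apply: (IH Y) => //; move/negP: hY; rewrite -ltnNge => hY; lia.
Qed.

End Simple.

Section Minimal.
Variables (k : fieldType) (A : falgType k).
Implicit Types (u v x y : A) (X Y C : {vspace A}).
Hypothesis simpleA : forall I : {vspace A}, two_sided_ideal I -> I = 0%VS \/ I = fullv.
Variable L : {vspace A}.
Hypotheses (lL : left_ideal L) (nL : L != 0%VS)
  (minL : forall Y, left_ideal Y -> Y != 0%VS -> (\dim L <= \dim Y)%N).

Definition Gp X := forall x,
  (\dim (amull x @: X) * \dim L = \dim (amull x @: L) * \dim X)%N.

Lemma Lb_dim b : amulr b @: L != 0%VS ->
  \dim (amulr b @: L) = \dim L /\ (L :&: lker (amulr b))%VS = 0%VS.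
Proof.
move=> nz.
have h1 := minL (lid_img b lL) nz.
have h2 := dim_img_le (amulr b) L.
have h3 := limg_ker_dim (amulr b) L.
split; first lia.
by apply/eqP; rewrite -dimv_eq0; apply/eqP; lia.
Qed.

Lemma comm_lr x b : (amull x \o amulr b = amulr b \o amull x)%VF.
Proof. by apply/lfunP => z; rewrite !comp_lfunE !amullE !amulrE mulrA. Qed.

Lemma Gp_Lb b : amulr b @: L != 0%VS -> Gp (amulr b @: L).
Proof.
move=> nz x; have [d1 k1] := Lb_dim nz.
rewrite -limg_comp comm_lr limg_comp limg_dim_eq ?d1 //.
apply/eqP; rewrite -subv0 -k1 capvS ?lid_left_mul //.
Qed.

Lemma dim_x_add X C x : left_ideal X -> left_ideal C -> (X :&: C = 0)%VS ->
  \dim (amull x @: (X + C)) = (\dim (amull x @: X) + \dim (amull x @: C))%N.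
Proof.
move=> lX lC dXC; rewrite limgD dimv_disjoint_sum //.
by apply/eqP; rewrite -subv0 -dXC capvS ?lid_left_mul.
Qed.

Lemma Gp_add X C : left_ideal X -> left_ideal C -> (X :&: C = 0)%VS ->
  Gp X -> Gp C -> Gp (X + C).
Proof.
move=> lX lC dXC gX gC x; rewrite dim_x_add // dimv_disjoint_sum //.
by rewrite mulnDl mulnDr gX gC.
Qed.

Lemma lid0 : left_ideal (0%VS : {vspace A}).
Proof. by apply/lidP => a x; rewrite memv0 => /eqP ->; rewrite mulr0 mem0v. Qed.

Lemma Gp0 : Gp 0%VS.
Proof. by move=> x; rewrite limg0 dimv0 muln0. Qed.

Lemma step X : left_ideal X -> X != fullv ->
  exists Y, [/\ left_ideal Y, (X :&: Y = 0)%VS, (0 < \dim Y)%N & Gp Y].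
Proof.
move=> lX nX.
case: (classic (exists b, ~~ (amulr b @: L <= X)%VS)) => [[b hb]|hb]; last first.
  exfalso; move/negP: nX; apply; rewrite eqEdim subvf dimvS //.
  have : (L * fullv <= X)%VS.
    apply/prodvP => l b Hl _.
    case: (boolP (amulr b @: L <= X)%VS) => h; last by exfalso; apply: hb; exists b.
    by apply: (subvP h); rewrite -amulrE memv_img.
  rewrite simple_full //.
set Y := amulr b @: L.
have nY : Y != 0%VS by apply/eqP => e; move: hb; rewrite -/Y e sub0v.
have [dY kY] := Lb_dim nY.
exists Y; split.
- exact: lid_img.
- apply/eqP; case: (eqVneq (X :&: Y)%VS 0%VS) => // nc; exfalso.
  have := minL (lid_cap lX (lid_img b lL)) nc; rewrite -dY => hd.
  have : (X :&: Y == Y)%VS by rewrite eqEdim capvSr hd.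
  move=> /eqP e; move/negP: hb; apply; by rewrite -/Y -e capvSl.
- by rewrite dY lt0n dimv_eq0.
- exact: Gp_Lb.
Qed.

Lemma complement_gen d X : (\dim (fullv : {vspace A}) - \dim X <= d)%N ->
  left_ideal X ->
  exists C, [/\ left_ideal C, (X :&: C = 0)%VS, (X + C = fullv)%VS & Gp C].
Proof.
elim: d X => [|d IH] X hd lX; case: (eqVneq X fullv) => [->|nX].
- by exists 0%VS; split; [exact: lid0 | exact: capv0 | exact: addv0 | exact: Gp0].
- exfalso; move/negP: nX; apply; rewrite eqEdim subvf /=; lia.
- by exists 0%VS; split; [exact: lid0 | exact: capv0 | exact: addv0 | exact: Gp0].
have [Y [lY dXY pY gY]] := step lX nX.
have dXY' : \dim (X + Y) = (\dim X + \dim Y)%N by rewrite dimv_disjoint_sum.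
have [|C' [lC' dC' eC' gC']] := IH (X + Y)%VS _ (lid_add lX lY); first lia.
have dYC' : (Y :&: C' = 0)%VS.
  by apply/eqP; rewrite -subv0 -dC' capvS ?addvSr.
exists (Y + C')%VS; split.
- exact: lid_add.
- apply/eqP; rewrite -dimv_eq0.
  have h1 := dimv_sum_cap X (Y + C').
  have h2 : \dim (X + (Y + C')) = \dim (fullv : {vspace A}) by rewrite addvA eC'.
  have h3 : \dim (fullv : {vspace A}) = (\dim (X + Y) + \dim C')%N.
    by rewrite -eC' dimv_disjoint_sum.
  have h4 := dimv_disjoint_sum dYC'.
  apply/eqP; lia.
- by rewrite addvA.
- exact: Gp_add.
Qed.

Lemma complement X : left_ideal X ->
  exists C, [/\ left_ideal C, (X :&: C = 0)%VS, (X + C = fullv)%VS & Gp C].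
Proof. exact: (complement_gen (leqnn _)). Qed.

Lemma Gp_all X : left_ideal X -> Gp X.
Proof.
move=> lX.
have [C0 [_ d0 e0 g0]] := complement lid0.
have gF : Gp fullv by rewrite -e0 add0v.
have [C [lC dXC eXC gC]] := complement lX.
move=> x; have h1 := dim_x_add x lX lC dXC; rewrite eXC in h1.
have h2 := dimv_disjoint_sum dXC; rewrite eXC in h2.
have := gF x; have := gC x; rewrite h1 h2; nia.
Qed.

Lemma dimL_gt0 : (0 < \dim L)%N.
Proof. by rewrite lt0n dimv_eq0. Qed.

Lemma g_lemma x X : left_ideal X ->
  (\dim (amull x @: X) * \dim (fullv : {vspace A}) =
   \dim (amull x @: fullv) * \dim X)%N.
Proof.
move=> lX; have g1 := Gp_all lX x; have g2 := Gp_all (lid_full A) x.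
apply/eqP; rewrite -(eqn_pmul2r dimL_gt0); apply/eqP.
nia.
Qed.

Lemma idem_of X : left_ideal X ->
  exists2 e, e \in X & forall y, y \in X -> (y * e)%R = y.
Proof.
move=> lX; have [C [lC dXC eXC _]] := complement lX.
have : (1%R : A) \in (X + C)%VS by rewrite eXC memvf.
move=> /memv_addP [e He [c Hc E1]].
exists e => // y Hy.
have h1 : (y * c)%R \in C by move/lidP: lC; apply.
have h2 : (y * c)%R \in X.
  have -> : (y * c = y - y * e)%R by rewrite -{2}(mulr1 y) E1 mulrDr addrAC subrr add0r.
  by rewrite memvB //; move/lidP: lX; apply.
have : (y * c)%R \in (X :&: C)%VS by rewrite memv_cap h1 h2.
rewrite dXC memv0 => /eqP h3.
by rewrite -{2}(mulr1 y) E1 mulrDr h3 addr0.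
Qed.


Notation Ar u := (amulr u @: (fullv : {vspace A}))%VS.
Notation Al u := (amull u @: (fullv : {vspace A}))%VS.

Lemma memAr u y : (u * u = u)%R -> (y \in Ar u) = ((y * u)%R == y).
Proof.
move=> uu; apply/idP/eqP => [/memv_imgP [z _ ->]|<-]; first by rewrite amulrE -mulrA uu.
by rewrite -amulrE memv_img ?memvf.
Qed.

Lemma memAl u y : (u * u = u)%R -> (y \in Al u) = ((u * y)%R == y).
Proof.
move=> uu; apply/idP/eqP => [/memv_imgP [z _ ->]|<-]; first by rewrite amullE mulrA uu.
by rewrite -amullE memv_img ?memvf.
Qed.

Lemma lid_Ar u : left_ideal (Ar u).
Proof. exact: lid_img (lid_full A). Qed.

Lemma equiv_le u v : (u * u = u)%R -> \dim (Ar u) = \dim L -> v != 0%R ->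
  (\dim (Al u) <= \dim (Al v))%N.
Proof.
move=> uu dU nv.
have [a ta] : exists a, (v * a * u)%R != 0%R.
  apply: NNPP => H.
  have u0 : u = 0%R.
    apply: (simple_ann simpleA (lid_Ar v)).
    - by apply/eqP => e; move: (memv_imgAr v); rewrite e memv0 (negPf nv).
    - move=> x b /memv_imgP [z _ ->]; rewrite amulrE.
      case: (eqVneq (v * b * u)%R 0%R) => [h|h]; last by exfalso; apply: H; exists b.
      by rewrite -!mulrA (mulrA v) h mulr0.
  move: dU; rewrite u0; have -> : Ar 0%R = 0%VS.
    apply/eqP; rewrite -subv0; apply/subvP => _ /memv_imgP [z _ ->].
    by rewrite amulrE mulr0 mem0v.
  by rewrite dimv0 => h; move: (dimL_gt0); rewrite -h.
set t := (v * a * u)%R.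
have sub : (Ar t <= Ar u)%VS.
  apply/subvP => _ /memv_imgP [z _ ->]; rewrite amulrE memAr //.
  by rewrite /t -!mulrA uu.
have nt : Ar t != 0%VS.
  by apply/eqP => e; move: (memv_imgAr t); rewrite e memv0 (negPf ta).
have eq : Ar t = Ar u.
  apply/eqP; rewrite eqEdim sub dU; exact: minL (lid_Ar t) nt.
have : u \in Ar t by rewrite eq memAr // uu.
move=> /memv_imgP [y _]; rewrite amulrE => uy.
have ker : (Al u :&: lker (amull t) = 0)%VS.
  apply/eqP; rewrite -subv0; apply/subvP => z; rewrite memv_cap memv_ker amullE.
  rewrite memAl // => /andP [/eqP zu /eqP tz].
  by rewrite memv0 -zu uy -mulrA tz mulr0.
rewrite -(limg_dim_eq ker) dimvS //.
apply/subvP => _ /memv_imgP [w /memv_imgP [z _ ->] ->].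
rewrite !amullE /t -!mulrA -amullE memv_img ?memvf //.
Qed.

Lemma orth_dims u v : (u * u = u)%R -> (v * v = v)%R -> (u * v = 0)%R -> (v * u = 0)%R ->
  \dim (Ar (u + v)%R) = (\dim (Ar u) + \dim (Ar v))%N /\
  \dim (Al (u + v)%R) = (\dim (Al u) + \dim (Al v))%N.
Proof.
move=> uu vv uv vu.
have ww : ((u + v) * (u + v) = u + v)%R.
  by rewrite mulrDl !mulrDr uu vv uv vu addr0 add0r.
split.
- have -> : Ar (u + v)%R = (Ar u + Ar v)%VS.
    apply/eqP; rewrite eqEdim; apply/andP; split.
      apply/subvP => _ /memv_imgP [z _ ->]; rewrite amulrE mulrDr.
      by apply: memv_add; rewrite -amulrE memv_img ?memvf.
    rewrite dimvS // subv_add; apply/andP; split; apply/subvP => z.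
      by rewrite !memAr // => /eqP zu; rewrite mulrDr -{2}zu -mulrA uv mulr0 addr0 zu.
    by rewrite !memAr // => /eqP zv; rewrite mulrDr -{1}zv -mulrA vu mulr0 add0r zv.
  rewrite dimv_disjoint_sum //; apply/eqP; rewrite -subv0; apply/subvP => z.
  rewrite memv_cap !memAr // memv0 => /andP [/eqP zu /eqP zv].
  by rewrite -zu -zv -mulrA vu mulr0.
- have -> : Al (u + v)%R = (Al u + Al v)%VS.
    apply/eqP; rewrite eqEdim; apply/andP; split.
      apply/subvP => _ /memv_imgP [z _ ->]; rewrite amullE mulrDl.
      by apply: memv_add; rewrite -amullE memv_img ?memvf.
    rewrite dimvS // subv_add; apply/andP; split; apply/subvP => z.
      by rewrite !memAl // => /eqP zu; rewrite mulrDl -{2}zu mulrA vu mul0r addr0 zu.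
    by rewrite !memAl // => /eqP zv; rewrite mulrDl -{1}zv mulrA uv mul0r add0r zv.
  rewrite dimv_disjoint_sum //; apply/eqP; rewrite -subv0; apply/subvP => z.
  rewrite memv_cap !memAl // memv0 => /andP [/eqP zu /eqP zv].
  by rewrite -zu -zv mulrA uv mul0r.
Qed.


Lemma Ar0 : Ar 0%R = 0%VS.
Proof.
apply/eqP; rewrite -subv0; apply/subvP => _ /memv_imgP [z _ ->].
by rewrite amulrE mulr0 mem0v.
Qed.

Lemma Al0 : Al 0%R = 0%VS.
Proof.
apply/eqP; rewrite -subv0; apply/subvP => _ /memv_imgP [z _ ->].
by rewrite amullE mul0r mem0v.
Qed.

Lemma arith1 (l a b c d : nat) : (0 < l)%N -> a = (b + c)%N -> b = l -> (a <= d.+1)%N -> (c <= d)%N.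
Proof. lia. Qed.

Lemma DA f : (f * f = f)%R -> \dim (Ar f) = \dim L -> forall e, (e * e = e)%R ->
  (\dim (Al e) * \dim L = \dim (Ar e) * \dim (Al f))%N.
Proof.
move=> ff dF.
have nf : f != 0%R.
  by apply/eqP => e; move: dF (dimL_gt0); rewrite e Ar0 dimv0 => <-.
suff H : forall d e, (e * e = e)%R -> (\dim (Ar e) <= d)%N ->
  (\dim (Al e) * \dim L = \dim (Ar e) * \dim (Al f))%N.
  by move=> e ee; apply: (H _ e ee (leqnn _)).
elim=> [|d IH] e ee hd.
  have : Ar e = 0%VS by apply/eqP; rewrite -dimv_eq0 -leqn0.
  move=> h; have e0 : e = 0%R.
    by move: (memv_imgAr e); rewrite h memv0 => /eqP.
  by rewrite h e0 Al0 !dimv0.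
case: (eqVneq e 0%R) => [->|ne]; first by rewrite Al0 Ar0 !dimv0.
have [l [a [Hl ta]]] : exists l a, l \in L /\ (l * a * e)%R != 0%R.
  apply: NNPP => H; move/negP: ne; apply; apply/eqP.
  apply: (simple_ann simpleA lL nL) => x b Hx.
  by apply/eqP; apply: NNPP => h; apply: H; exists x, b; split => //; apply/negP.
set L' := amulr (a * e)%R @: L.
have lL' : left_ideal L' := lid_img _ lL.
have wL' : (l * a * e)%R \in L' by rewrite -mulrA -amulrE memv_img.
have nL' : L' != 0%VS by apply/eqP => h; move: wL'; rewrite h memv0 (negPf ta).
have [dL' _] := Lb_dim nL'.
have sL' : (L' <= Ar e)%VS.
  by apply/subvP => _ /memv_imgP [z _ ->]; rewrite amulrE memAr // -!mulrA ee.
have [e' He' Ie'] := idem_of lL'.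
have e'e : (e' * e = e')%R by apply/eqP; rewrite -memAr // (subvP sL').
have e'e' : (e' * e' = e')%R by apply: Ie'.
have ne' : e' != 0%R.
  by apply/eqP => h; move: (Ie' _ wL'); rewrite h mulr0 => h2; move: ta; rewrite -h2 eqxx.
set e1 := (e * e')%R.
have e1e1 : (e1 * e1 = e1)%R by rewrite /e1 mulrA -(mulrA e) e'e -mulrA e'e'.
have ee1 : (e * e1 = e1)%R by rewrite /e1 mulrA ee.
have e1e : (e1 * e = e1)%R by rewrite /e1 -mulrA e'e.
have e'e1 : (e' * e1 = e')%R by rewrite /e1 mulrA e'e e'e'.
have sA1 : (Ar e1 <= L')%VS.
  apply/subvP => _ /memv_imgP [z _ ->]; rewrite amulrE /e1 mulrA.
  by move/lidP: lL'; apply.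
have nA1 : Ar e1 != 0%VS.
  apply/eqP => h; have : e' \in Ar e1 by rewrite memAr // e'e1.
  by rewrite h memv0 (negPf ne').
have dA1 : \dim (Ar e1) = \dim L.
  have h1 := minL (lid_Ar e1) nA1; have h2 := dimvS sA1.
  by apply/eqP; rewrite eqn_leq h1 andbT -dL'.
have ne1 : e1 != 0%R by apply/eqP => h; move: nA1; rewrite h Ar0 eqxx.
set e2 := (e - e1)%R.
have e2e2 : (e2 * e2 = e2)%R.
  by rewrite /e2 mulrBl !mulrBr ee ee1 e1e e1e1 subrr subr0.
have e1e2 : (e1 * e2 = 0)%R by rewrite /e2 mulrBr e1e e1e1 subrr.
have e2e1 : (e2 * e1 = 0)%R by rewrite /e2 mulrBl ee1 e1e1 subrr.
have [dr dl] := orth_dims e1e1 e2e2 e1e2 e2e1.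
have ee12 : (e1 + e2 = e)%R by rewrite /e2 addrC subrK.
rewrite ee12 in dr dl.
have IH2 := IH e2 e2e2 (arith1 dimL_gt0 dr dA1 hd).
have eqv : \dim (Al e1) = \dim (Al f).
  apply/eqP; rewrite eqn_leq equiv_le //= equiv_le //.
by rewrite dl dr mulnDl IH2 eqv dA1 mulnDl mulnC.
Qed.

Lemma dim_lr e : (e * e = e)%R -> \dim (Al e) = \dim (Ar e).
Proof.
move=> ee; have [f Hf If] := idem_of lL.
have ff : (f * f = f)%R by apply: If.
have eqA : Ar f = L.
  apply/eqP; rewrite eqEdim; apply/andP; split.
    by apply/subvP => _ /memv_imgP [z _ ->]; rewrite amulrE; move/lidP: lL; apply.
  by apply: dimvS; apply/subvP => y Hy; rewrite memAr // If.
have dF : \dim (Ar f) = \dim L by rewrite eqA.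
have h1 := DA ff dF (mulr1 1%R).
have e1 : Al 1%R = fullv.
  by apply/eqP; rewrite eqEdim subvf /=; apply: dimvS; apply/subvP => y _; rewrite memAl ?mulr1 ?mul1r.
have e2 : Ar 1%R = fullv.
  by apply/eqP; rewrite eqEdim subvf /=; apply: dimvS; apply/subvP => y _; rewrite memAr ?mulr1 ?mul1r.
rewrite e1 e2 mulnC in h1.
have cF : \dim (Al f) = \dim L.
  by apply/eqP; rewrite -(eqn_pmul2l (dim_full_gt0 A)) -h1 mulnC.
by have := DA ff dF ee; rewrite cF => /eqP; rewrite eqn_pmul2r ?dimL_gt0 // => /eqP.
Qed.

End Minimal.

Section Rann.
Variables (k : fieldType) (A : falgType k).

Lemma rannP (I : {vspace A}) a :
  a \in rann I <-> (forall x, x \in I -> (x * a)%R = 0%R).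
Proof.
rewrite /rann memvE; split.
  move/subv_bigcapP => H x Hx.
  have : (I <= lker (amulr a))%VS.
    rewrite -(span_basis (vbasisP I)); apply/span_subvP => b /tnthP [t ->].
    have := H t isT; rewrite -memvE !memv_ker amullE amulrE //.
  by move/subvP/(_ x Hx); rewrite memv_ker amulrE => /eqP.
move=> H; apply/subv_bigcapP => t _; rewrite -memvE memv_ker amullE H //.
exact: vbasis_mem (mem_tnth _ _).
Qed.
End Rann.

Section Final.
Variables (k : fieldType) (A : falgType k).
Implicit Types (u v x y : A) (X Y C : {vspace A}).
Variable Ir : {vspace A}.
Hypothesis lIr : left_ideal Ir.
Variable e : A.
Hypotheses (He : e \in Ir) (Ie : forall y, y \in Ir -> (y * e)%R = y).

Lemma ee : (e * e = e)%R. Proof. exact: Ie. Qed.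

Lemma rannE : rann Ir = lker (amull e).
Proof.
apply/vspaceP => a; rewrite memv_ker amullE; apply/idP/idP.
  by move/rannP/(_ e He) => ->.
move/eqP => h; apply/rannP => x Hx; by rewrite -(Ie Hx) -mulrA h mulr0.
Qed.

Lemma capE J : left_ideal J -> (J <= Ir)%VS ->
  (J :&: lker (amull e))%VS = (lker (amull e) * J)%VS.
Proof.
move=> lJ sJ; apply: subv_anti; apply/andP; split.
  apply/subvP => z; rewrite memv_cap memv_ker amullE => /andP [Hz /eqP ez].
  have -> : z = ((1 - e) * z)%R by rewrite mulrBl mul1r ez subr0.
  by apply: memv_mul => //; rewrite memv_ker amullE mulrBr mulr1 ee subrr.
apply/prodvP => a j; rewrite memv_ker amullE => /eqP ea Hj.
by rewrite memv_cap memv_ker amullE mulrA ea mul0r eqxx andbT; move/lidP: lJ; apply.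
Qed.

Lemma KE : (rann Ir * Ir)%VS = (Ir :&: lker (amull e))%VS.
Proof. by rewrite rannE capE // subvv. Qed.

Lemma partA J : left_ideal J -> (J <= Ir)%VS ->
  (J :&: (rann Ir * Ir))%VS = (rann Ir * J)%VS.
Proof.
move=> lJ sJ; rewrite KE capvA (capv_idPl sJ) capE // rannE //.
Qed.

Lemma dimTK T : (T <= Ir)%VS ->
  \dim (T + (Ir :&: lker (amull e)))%VS =
  (\dim (Ir :&: lker (amull e)) + \dim (amull e @: T))%N.
Proof.
move=> sT; have h1 := dimv_sum_cap T (Ir :&: lker (amull e)).
have h2 := limg_ker_dim (amull e) T.
rewrite capvA (capv_idPl sT) in h1.
lia.
Qed.


Lemma T0prop S : (Ir :&: lker (amull e) <= S)%VS -> (S <= Ir)%VS -> (Ir * S <= S)%VS ->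
  (fullv * (amull e @: S) <= S)%VS /\
  (fullv * (amull e @: S) + (Ir :&: lker (amull e)) = S)%VS.
Proof.
move=> KS SI IS.
have inK : forall z, z \in Ir -> ((1 - e) * z)%R \in (Ir :&: lker (amull e))%VS.
  move=> z Hz; rewrite memv_cap memv_ker amullE mulrA mulrBr mulr1 ee subrr mul0r eqxx andbT.
  by move/lidP: lIr; apply.
have sub : (fullv * (amull e @: S) <= S)%VS.
  apply/prodvP => a _ _ /memv_imgP [s Hs ->]; rewrite amullE.
  have -> : (a * (e * s) = (e * a * e) * s + (1 - e) * (a * e * s))%R.
    rewrite mulrBl mul1r !mulrA. by rewrite addrCA subrr addr0.
  apply: memvD.
    apply: (subvP IS); apply: memv_mul => //.
    by move/lidP: lIr; apply.
  apply: (subvP KS); apply: inK.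
  by move/lidP: lIr; apply; apply: (subvP SI).
split => //; apply: subv_anti; apply/andP; split; first by rewrite subv_add sub KS.
apply/subvP => s Hs.
have -> : s = (e * s + (1 - e) * s)%R by rewrite mulrBl mul1r addrC subrK.
apply: memv_add; last by apply: inK; apply: (subvP SI).
by have := memv_mul (memvf 1%R) (memv_img (amull e) Hs); rewrite mul1r amullE.
Qed.

End Final.
Unset Implicit Arguments. Set Strict Implicit.

Lemma arithA (n a c d : nat) : (0 < n)%N -> (a * n ^ 2 = n * c * d)%N -> (a * n = c * d)%N.
Proof. move=> h1 h2; apply/eqP; rewrite -(eqn_pmul2l h1); apply/eqP; nia. Qed.
Lemma arithB (n a b c : nat) : (0 < n)%N -> (a * n = c * (n * b))%N -> a = (b * c)%N.
Proof. move=> h1 h2; apply/eqP; rewrite -(eqn_pmul2l h1); apply/eqP; nia. Qed.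
Lemma arithC (n a c t t1 : nat) : (0 < c)%N -> (a * n = c * t)%N -> (a * n = c * t1)%N -> t = t1.
Proof. move=> h1 h2 h3; apply/eqP; rewrite -(eqn_pmul2l h1); apply/eqP; nia. Qed.
Lemma arithD (n a b c t : nat) : (0 < c)%N -> a = (b * c)%N -> (a * n = c * t)%N -> t = (n * b)%N.
Proof. move=> h1 h2 h3; apply/eqP; rewrite -(eqn_pmul2l h1); apply/eqP; nia. Qed.

Theorem mainTheorem8 (k : fieldType) (A : falgType k) (n r : nat)
  (i : nat -> nat) (Ir : {vspace A}) :
  central_simple A -> csa_degree A n ->
  (1 < r)%N -> (1 <= i 1%N)%N ->
  (forall j, (1 <= j)%N -> (j < r)%N -> (i j < i j.+1)%N) ->
  (i r <= n)%N ->
  left_ideal Ir -> \dim Ir = (n * i r)%N ->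
  let K := (rann Ir * Ir)%VS in
  (* kernel of I_j -> I_r / I_r° I_r is I_r° I_j *)
  (forall J : {vspace A}, left_ideal J -> (J <= Ir)%VS ->
      (J :&: K)%VS = (rann Ir * J)%VS) /\
  let flagA := fun T : {ffun 'I_r.-1 -> {vspace A}} =>
    (forall j : 'I_r.-1, left_ideal (T j) /\ (T j <= Ir)%VS /\
        \dim (T j) = (n * i j.+1)%N) /\
    (forall j l : 'I_r.-1, (j <= l)%N -> (T j <= T l)%VS) in
  (* left ideals of B = I_r / K, encoded as their preimages in I_r *)
  let flagB := fun S : {ffun 'I_r.-1 -> {vspace A}} =>
    (forall j : 'I_r.-1, (K <= S j)%VS /\ (S j <= Ir)%VS /\
        (Ir * S j <= S j)%VS /\
        \dim (S j) = (\dim K + i j.+1 * i r)%N) /\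
    (forall j l : 'I_r.-1, (j <= l)%N -> (S j <= S l)%VS) in
  let Phi := fun T : {ffun 'I_r.-1 -> {vspace A}} =>
    [ffun j => (T j + K)%VS] in
  (forall T, flagA T -> flagB (Phi T)) /\
  (forall T1 T2, flagA T1 -> flagA T2 -> Phi T1 = Phi T2 -> T1 = T2) /\
  (forall S, flagB S -> exists2 T, flagA T & Phi T = S).
Proof.
move=> [_ simpleA] Hdeg Hr Hi1 Hinc Hir lIr dIr K.
have [L [lL nL minL]] := exists_minimal A.
have [e He Ie] := idem_of simpleA lL nL minL lIr.
have eeq : (e * e = e)%R := Ie e He.
have ArIr : (amulr e @: fullv)%VS = Ir.
  apply/eqP; rewrite eqEsubv; apply/andP; split.
    apply/subvP => _ /memv_imgP [z _ ->]; rewrite amulrE.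
    by move/lidP: lIr; apply.
  by apply/subvP => y Hy; rewrite memAr // Ie.
have dAl : \dim (amull e @: fullv)%VS = (n * i r)%N.
  by rewrite (dim_lr simpleA lL nL minL eeq) ArIr.
have Hdeg' : \dim (fullv : {vspace A}) = (n ^ 2)%N := Hdeg.
have npos : (0 < n)%N.
  have := dim_full_gt0 A; rewrite Hdeg'; by case: n {Hir dIr dAl Hdeg Hdeg'}.
have irpos : (0 < i r)%N.
  have r0 : (0 < r)%N by apply: ltn_trans Hr.
  have h := Hinc r.-1; rewrite prednK // in h.
  by apply: leq_ltn_trans (leq0n _) (h _ _); rewrite // -ltnS prednK.
have KE' : K = (Ir :&: lker (amull e))%VS by exact: KE.
have gT : forall T, left_ideal T -> (\dim (amull e @: T) * n = i r * \dim T)%N.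
  move=> T lT; have := g_lemma simpleA lL nL minL e lT.
  by rewrite Hdeg' dAl; apply: arithA.
split.
  by move=> J lJ sJ; rewrite /K; exact: (partA lIr He Ie lJ sJ).
move=> flagA flagB Phi.
split; [|split].
- move=> T [HT HM]; split.
    move=> j; have [lT [sT dT]] := HT j; rewrite /Phi ffunE; split; [|split; [|split]].
    + by rewrite addvSr.
    + by rewrite subv_add sT KE' capvSl.
    + rewrite prodvDr; apply: addvS.
        by apply: subv_trans lT; apply: prodvSl; exact: subvf.
      rewrite KE'; apply/prodvP => x y Hx; rewrite memv_cap memv_ker amullE => /andP [Hy /eqP ey].
      by rewrite -(Ie x Hx) -mulrA ey mulr0 mem0v.
    + rewrite KE' dimTK //; congr addn.
      apply: (@arithB n _ (i j.+1) (i r) npos). by rewrite gT // dT.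
  move=> j l jl; rewrite /Phi !ffunE; exact: addvS (HM j l jl) (subvv _).
- move=> T1 T2 [H1 M1] [H2 M2] E; apply/ffunP => j.
  have Ej : Phi T1 j = Phi T2 j by rewrite E.
  rewrite /Phi /= !ffunE in Ej.
  have [l1 [s1 d1]] := H1 j; have [l2 [s2 d2]] := H2 j.
  have lT := lid_add l1 l2.
  have sT : (T1 j + T2 j <= Ir)%VS by rewrite subv_add s1 s2.
  have ETK : ((T1 j + T2 j) + K = T1 j + K)%VS by rewrite -addvA -Ej addvA addvv.
  rewrite KE' in ETK.
  have h := dimTK lIr He sT; rewrite ETK dimTK // in h.
  have h2 : \dim (amull e @: T1 j) = \dim (amull e @: (T1 j + T2 j)) by apply/eqP; rewrite -(eqn_add2l (\dim (Ir :&: lker (amull e)))) h.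
  have dT : \dim (T1 j + T2 j) = \dim (T1 j).
    have h3 := gT _ l1; rewrite h2 in h3. exact: (arithC _ _ _ _ _ irpos (gT _ lT) h3).
  have e1 : T1 j = (T1 j + T2 j)%VS by apply/eqP; rewrite eqEdim addvSl dT leqnn.
  have e2 : T2 j = (T1 j + T2 j)%VS by apply/eqP; rewrite eqEdim addvSr dT d1 d2 leqnn.
  by rewrite e1 -e2.
- move=> S [HS MS].
  exists [ffun j => (fullv * (amull e @: S j))%VS].
    split.
      move=> j; rewrite ffunE; have [KS [SI [IS dS]]] := HS j.
      rewrite KE' in KS dS.
      have [sub eq] := T0prop lIr He Ie KS SI IS.
      split; first exact: lid_mulA.
      split; first exact: subv_trans SI.
      have := dimTK lIr He (subv_trans sub SI); rewrite eq dS => /eqP; rewrite eqn_add2l => /eqP h.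
      exact: (arithD _ _ _ _ _ irpos (esym h) (gT _ (lid_mulA _))).
    by move=> j l jl; rewrite !ffunE prodvSr // limgS // MS.
  apply/ffunP => j; rewrite /Phi !ffunE.
  have [KS [SI [IS dS]]] := HS j.
  rewrite KE' in KS *.
  by have [_ ->] := T0prop lIr He Ie KS SI IS.
Qed.
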